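(* For every even positive integer $k$ there exists a connected graph $G$ with exactly $k$ basis forced vertices and $|E(G)|=\frac{n(n-1)}{2}-2k$, where $n=|V(G)|$.
   Context: All graphs are finite and simple. For vertices $u,v$ of a connected graph $G$, $d(u,v)$ is the length of a shortest $u$–$v$ path. A set $R\subseteq V(G)$ is a resolving set if for all distinct $x,y\in V(G)$ there is $r\in R$ with $d(r,x)\neq d(r,y)$. The metric dimension $\dim(G)$ is the minimum cardinality of a resolving set, and a resolving set of cardinality $\dim(G)$ is a metric basis. A vertex is a basis forced vertex if it belongs to every metric basis of $G$. *)

(* Defs.v *)
From mathcomp Require Import all_boot.
Set Implicit Arguments. Unset Strict Implicit. Unset Printing Implicit Defensive.

Section Graph.
Variables (T : finType) (e : rel T).

Definition simple_graph : bool :=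
  [forall x, ~~ e x x] && [forall x, forall y, e x y == e y x].

Definition connected_graph : Prop := forall x y : T, connect e x y.

Definition edges : {set {set T}} := [set [set x; y] | x in T, y in T & e x y].

Definition walk_len (x y : T) (m : nat) : bool :=
  [exists p : m.-tuple T, path e x p && (last x p == y)].

(* d(x,y): least m such that a walk (equivalently a path) of length m joins
   x to y; shortest walks have length < #|T| when they exist, and for
   unreachable pairs the value is #|T| (irrelevant for connected graphs). *)
Definition dist (x y : T) : nat := find (walk_len x y) (iota 0 #|T|).

Definition resolving (R : {set T}) : bool :=
  [forall x, forall y, (x != y) ==> [exists r in R, dist r x != dist r y]].

Definition metric_basis (R : {set T}) : bool :=
  resolving R && [forall S : {set T}, resolving S ==> (#|R| <= #|S|)].

Definition basis_forced (v : T) : bool :=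
  [forall R : {set T}, metric_basis R ==> (v \in R)].

Definition basis_forced_set : {set T} := [set v | basis_forced v].

End Graph.

(* Main.v *)
Require Import Defs.
From mathcomp Require Import all_boot zify.
Set Implicit Arguments. Unset Strict Implicit. Unset Printing Implicit Defensive.

Definition hp (a b : nat) : bool :=
  [|| (a==0)&&(b==1), (a==1)&&(b==0), (a==0)&&(b==2), (a==2)&&(b==0),
      (a==1)&&(b==3), (a==3)&&(b==1), (a==2)&&(b==4) | (a==4)&&(b==2)].
Definition Hn m (x y : nat) : bool :=
  [&& x < 5*m, y < 5*m, x %/ 5 == y %/ 5 & hp (x %% 5) (y %% 5)].

Lemma Hn_blk m i p i' q : i < m -> p < 5 -> i' < m -> q < 5 ->
  Hn m (5*i+p) (5*i'+q) = (i == i') && hp p q.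
Proof.
move=> Hi Hp Hi' Hq. rewrite /Hn.
have -> : (5*i+p) %/ 5 = i by lia.
have -> : (5*i'+q) %/ 5 = i' by lia.
have -> : (5*i+p) %% 5 = p by lia.
have -> : (5*i'+q) %% 5 = q by lia.
have -> : 5*i+p < 5*m by lia.
by have -> : 5*i'+q < 5*m by lia.
Qed.

Definition Pb (b : nat -> bool) := all (fun p => all (fun q => [|| p == q, b p, b q |
   has (fun j => b j && (hp j p != hp j q)) (iota 0 5)]) (iota 0 5)) (iota 0 5).
Definition Qb (b : nat -> bool) := all (fun p => b p || has (fun j => b j && hp j p) (iota 0 5)) (iota 0 5).

Lemma fin1 b : Pb b -> 2 <= b 0 + b 1 + b 2 + b 3 + b 4.
Proof. rewrite /Pb /=. by case: (b 0); case: (b 1); case: (b 2); case: (b 3); case: (b 4). Qed.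

Lemma fin2 b : Pb b -> Qb b -> b 0 + b 1 + b 2 + b 3 + b 4 <= 2 ->
  [&& ~~ b 0, b 1, b 2, ~~ b 3 & ~~ b 4].
Proof. rewrite /Pb /Qb /=. by case: (b 0); case: (b 1); case: (b 2); case: (b 3); case: (b 4). Qed.

Lemma walk0 (T : finType) (e : rel T) x y : walk_len e x y 0 = (x == y).
Proof.
apply/existsP/eqP => [[[[|a s] Hs] //= /eqP]|<-] //.
by exists [tuple]; rewrite /= eqxx.
Qed.

Lemma walk1 (T : finType) (e : rel T) x y : walk_len e x y 1 = e x y.
Proof.
apply/existsP/idP => [[[[|a [|b s]] Hs] //= /andP[/andP[H _] /eqP <-]] //|H].
by exists [tuple y]; rewrite /= H eqxx.
Qed.

Lemma walk2 (T : finType) (e : rel T) x y w : e x w -> e w y -> walk_len e x y 2.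
Proof.
by move=> H1 H2; apply/existsP; exists [tuple w; y]; rewrite /= H1 H2 eqxx.
Qed.

Definition ge m : rel 'I_(5*m).+1 := fun x y => (x != y) && ~~ Hn m x y.
Definition zv m : 'I_(5*m).+1 := ord_max.
Arguments ge m : clear implicits.
Arguments zv m : clear implicits.
Lemma zvE m : nat_of_ord (zv m) = 5*m. Proof. by []. Qed.

Lemma Hn_z1 m y : Hn m (5*m) y = false. Proof. by rewrite /Hn ltnn. Qed.
Lemma Hn_z2 m x : Hn m x (5*m) = false. Proof. by rewrite /Hn ltnn andbF. Qed.

Lemma ge_z1 m x : x != zv m -> ge m (zv m) x.
Proof. by move=> H; rewrite /ge eq_sym H zvE Hn_z1. Qed.
Lemma ge_z2 m x : x != zv m -> ge m x (zv m).
Proof. by move=> H; rewrite /ge H zvE Hn_z2. Qed.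

Lemma dist_ge m (x y : 'I_(5*m).+1) : 0 < m ->
  dist (ge m) x y = if x == y then 0 else if ge m x y then 1 else 2.
Proof.
move=> Hm; rewrite /dist card_ord.
rewrite (_ : iota 0 (5*m).+1 = [:: 0, 1, 2 & iota 3 (5*m - 2)]); last first.
  by rewrite (_ : (5*m).+1 = (5*m-2).+3) //; lia.
rewrite /= walk0 walk1.
case: eqP => // Hxy; case Hg: (ge m x y) => //.
have -> // : walk_len (ge m) x y 2.
have Hx : x != zv m.
  apply: contraFneq Hg => Ex; rewrite Ex in Hxy *; apply: ge_z1; rewrite eq_sym; apply/eqP.
  by move=> E; apply: Hxy; rewrite E.
have Hy : y != zv m.
  apply: contraFneq Hg => Ey; rewrite Ey in Hxy *; apply: ge_z2; by apply/eqP.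
by apply: (walk2 (w := zv m)); [apply: ge_z2|apply: ge_z1].
Qed.

Lemma vdec m (x : 'I_(5*m).+1) :
  x = zv m \/ exists i p, [/\ i < m, p < 5 & nat_of_ord x = 5*i+p].
Proof.
case: (ltnP x (5*m)) => H.
  by right; exists (x %/ 5), (x %% 5); split; lia.
by left; apply/val_inj => /=; have := ltn_ord x; lia.
Qed.

Lemma res_pair m (R : {set 'I_(5*m).+1}) (x y : 'I_(5*m).+1) : 0 < m -> resolving (ge m) R ->
  x != y -> x \notin R -> y \notin R -> exists2 r, r \in R & Hn m r x != Hn m r y.
Proof.
move=> Hm /forallP/(_ x)/forallP/(_ y)/implyP HR Hxy Hx Hy.
have /existsP [r /andP [Hr Hd]] := HR Hxy.
have rx : r != x by apply: contraNneq Hx => <-.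
have ry : r != y by apply: contraNneq Hy => <-.
exists r => //; move: Hd; rewrite !dist_ge // (negbTE rx) (negbTE ry) /ge rx ry /=.
by case: (Hn m r x); case: (Hn m r y).
Qed.

Lemma res_suff m (R : {set 'I_(5*m).+1}) : 0 < m ->
  (forall x y : 'I_(5*m).+1, x != y -> x \notin R -> y \notin R ->
     exists2 r, r \in R & Hn m r x != Hn m r y) -> resolving (ge m) R.
Proof.
move=> Hm H; apply/forallP => x; apply/forallP => y; apply/implyP => Hxy.
case Hx: (x \in R).
  apply/existsP; exists x; rewrite Hx !dist_ge // eqxx (negbTE Hxy).
  by case: ge.
case Hy: (y \in R).
  have Hyx : y != x by rewrite eq_sym.
  apply/existsP; exists y; rewrite Hy !dist_ge // eqxx (negbTE Hyx).
  by case: ge.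
have [r Hr Hd] := H x y Hxy (negbT Hx) (negbT Hy).
have rx : r != x by apply: contraFneq Hx => <-.
have ry : r != y by apply: contraFneq Hy => <-.
apply/existsP; exists r; rewrite Hr !dist_ge // (negbTE rx) (negbTE ry) /ge rx ry /=.
by move: Hd; case: (Hn m r x); case: (Hn m r y).
Qed.

Definition bb m (R : {set 'I_(5*m).+1}) i j : bool := (inord (5*i+j) : 'I_(5*m).+1) \in R.

Lemma inordv m i j : i < m -> j < 5 -> nat_of_ord (inord (5*i+j) : 'I_(5*m).+1) = 5*i+j.
Proof. by move=> Hi Hj; rewrite inordK //; lia. Qed.

Lemma res_local m (R : {set 'I_(5*m).+1}) i : 0 < m -> resolving (ge m) R -> i < m -> Pb (bb R i).
Proof.
move=> Hm HR Hi.
apply/allP => p; rewrite mem_iota => /andP[_ Hp].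
apply/allP => q; rewrite mem_iota => /andP[_ Hq]; cbv beta.
case: (eqVneq p q) => [->|Hpq]; first by [].
case Hbp: (bb R i p); first by rewrite orbT.
case Hbq: (bb R i q); first by rewrite !orbT.
apply/orP; right; apply/orP; right; apply/orP; right.
have Hxy : (inord (5*i+p) : 'I_(5*m).+1) != inord (5*i+q).
  by apply/eqP => /(congr1 val); rewrite /= !inordv //; lia.
have [r Hr Hd] := res_pair Hm HR Hxy (negbT Hbp) (negbT Hbq).
case: (vdec r) => [Er|[i' [j [Hi' Hj Er]]]].
  by move: Hd; rewrite Er zvE !Hn_z1.
move: Hd; rewrite Er !inordv // !Hn_blk //.
case: (eqVneq i' i) => [Ei|Ni] Hd; last by move: Hd.
subst i'.
apply/hasP; exists j; first by rewrite mem_iota; lia.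
rewrite Hd andbT /bb.
by have -> : (inord (5*i+j) : 'I_(5*m).+1) = r by apply/val_inj; rewrite /= inordv // Er.
Qed.

Lemma res_localz m (R : {set 'I_(5*m).+1}) i : 0 < m -> resolving (ge m) R -> zv m \notin R -> i < m -> Qb (bb R i).
Proof.
move=> Hm HR Hz Hi.
apply/allP => p; rewrite mem_iota => /andP[_ Hp]; cbv beta.
case Hbp: (bb R i p); first by [].
apply/orP; right.
have Hxy : (inord (5*i+p) : 'I_(5*m).+1) != zv m.
  by apply/eqP => /(congr1 val); rewrite /= inordv //; lia.
have [r Hr Hd] := res_pair Hm HR Hxy (negbT Hbp) Hz.
case: (vdec r) => [Er|[i' [j [Hi' Hj Er]]]].
  by move: Hd; rewrite Er zvE !Hn_z1.
move: Hd; rewrite zvE Hn_z2 Er !inordv // !Hn_blk //.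
case: (eqVneq i' i) => [Ei|Ni] Hd; last by move: Hd.
subst i'.
apply/hasP; exists j; first by rewrite mem_iota; lia.
move: Hd; rewrite /= eqbF_neg negbK => ->; rewrite andbT /bb.
by have -> : (inord (5*i+j) : 'I_(5*m).+1) = r by apply/val_inj; rewrite /= inordv // Er.
Qed.

Lemma blocks (F : nat -> nat) m : \sum_(0 <= x < 5*m) F x =
  \sum_(i < m) (F (5*i) + F (5*i+1) + F (5*i+2) + F (5*i+3) + F (5*i+4)).
Proof.
elim: m => [|m IH]; first by rewrite big_ord0 muln0 big_geq.
rewrite big_ord_recr -IH (@big_cat_nat _ _ _ (5*m) 0 (5*m.+1)); [|lia|lia].
congr (_ + _).
rewrite (_ : 5 * m.+1 = 5*m + 5); last by lia.
rewrite -{1}(add0n (5*m)) big_addn (_ : 5*m + 5 - 5*m = 5); last by lia.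
rewrite big_mkord !big_ord_recr big_ord0 /=.
by rewrite !(addnC _ (5*m)) addn0 add0n.
Qed.

Lemma card_dec m (R : {set 'I_(5*m).+1}) : #|R| =
  \sum_(i < m) (bb R i 0 + bb R i 1 + bb R i 2 + bb R i 3 + bb R i 4) + (zv m \in R).
Proof.
rewrite -sum1_card big_mkcond /=.
have -> : \sum_(x < (5*m).+1) (if x \in R then 1 else 0) =
   \sum_(x < (5*m).+1) nat_of_bool ((inord x : 'I_(5*m).+1) \in R).
  by apply: eq_bigr => x _; rewrite inord_val; case: (x \in R).
rewrite -(big_mkord xpredT (fun x => nat_of_bool ((inord x : 'I_(5*m).+1) \in R))).
rewrite big_nat_recr //= blocks /bb.
have -> : (inord (5*m) : 'I_(5*m).+1) = zv m by apply/val_inj; rewrite /= inordK.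
by under eq_bigr do rewrite addn0.
Qed.

Definition Bs m : {set 'I_(5*m).+1} := [set x : 'I_(5*m).+1 | (x < 5*m) && ((x %% 5 == 1) || (x %% 5 == 2))].

Lemma inBs m i j : i < m -> j < 5 -> ((inord (5*i+j) : 'I_(5*m).+1) \in Bs m) = (j == 1) || (j == 2).
Proof.
move=> Hi Hj; rewrite inE inordv //.
have -> : 5*i+j < 5*m by lia.
by have -> : (5*i+j) %% 5 = j by lia.
Qed.

Lemma zv_notin_Bs m : zv m \notin Bs m.
Proof. by rewrite inE zvE ltnn. Qed.

Lemma cardB m : #|Bs m| = 2*m.
Proof.
rewrite card_dec (eq_bigr (fun _ => 2)); last by move=> i _; rewrite /bb !inBs.
by rewrite sum_nat_const card_ord (negbTE (zv_notin_Bs m)) addn0 mulnC.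
Qed.

Definition w p := if p == 4 then 2 else 1.
Definition w2 p q := if p + q == 3 then 2 else 1.

Lemma fw p : p < 5 -> ~~ ((p == 1) || (p == 2)) -> hp (w p) p.
Proof. by case: p => [|[|[|[|[|p]]]]]. Qed.
Lemma fw_lt p : w p < 5. Proof. by rewrite /w; case: ifP. Qed.
Lemma fw_in p : (w p == 1) || (w p == 2). Proof. by rewrite /w; case: ifP. Qed.
Lemma fw2 p q : p < 5 -> q < 5 -> p != q -> ~~ ((p == 1) || (p == 2)) ->
  ~~ ((q == 1) || (q == 2)) -> hp (w2 p q) p != hp (w2 p q) q.
Proof. by case: p => [|[|[|[|[|p]]]]]; case: q => [|[|[|[|[|q]]]]]. Qed.
Lemma fw2_lt p q : w2 p q < 5. Proof. by rewrite /w2; case: ifP. Qed.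
Lemma fw2_in p q : (w2 p q == 1) || (w2 p q == 2). Proof. by rewrite /w2; case: ifP. Qed.

Lemma notinB m (x : 'I_(5*m).+1) i p : i < m -> p < 5 -> nat_of_ord x = 5*i+p ->
  x \notin Bs m -> ~~ ((p == 1) || (p == 2)).
Proof.
move=> Hi Hp Ex; have -> : x = inord (5*i+p) by apply/val_inj; rewrite /= inordv.
by rewrite inBs.
Qed.

Lemma resB m : 0 < m -> resolving (ge m) (Bs m).
Proof.
move=> Hm; apply: res_suff => // x y Hxy Hx Hy.
case: (vdec x) => [Ex|[i [p [Hi Hp Ex]]]];
case: (vdec y) => [Ey|[i' [q [Hi' Hq Ey]]]].
- by move: Hxy; rewrite Ex Ey eqxx.
- have Nq := notinB Hi' Hq Ey Hy.
  exists (inord (5*i' + w q)); first by rewrite inBs // ?fw_in ?fw_lt.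
  by rewrite Ex zvE Hn_z2 inordv ?fw_lt // Ey Hn_blk ?fw_lt // eqxx fw.
- have Np := notinB Hi Hp Ex Hx.
  exists (inord (5*i + w p)); first by rewrite inBs // ?fw_in ?fw_lt.
  by rewrite Ey zvE Hn_z2 inordv ?fw_lt // Ex Hn_blk ?fw_lt // eqxx fw.
- have Np := notinB Hi Hp Ex Hx.
  have Nq := notinB Hi' Hq Ey Hy.
  case: (eqVneq i i') => [Ei|Ni].
    subst i'.
    have Hpq : p != q.
      by apply: contraNneq Hxy => Epq; apply/eqP; apply/val_inj => /=; rewrite Ex Ey Epq.
    exists (inord (5*i + w2 p q)); first by rewrite inBs // ?fw2_in ?fw2_lt.
    by rewrite inordv ?fw2_lt // Ex Ey !Hn_blk ?fw2_lt // eqxx /= fw2.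
  exists (inord (5*i + w p)); first by rewrite inBs // ?fw_in ?fw_lt.
  by rewrite inordv ?fw_lt // Ex Ey !Hn_blk ?fw_lt // eqxx (negbTE Ni) fw.
Qed.

Lemma basisB m : 0 < m -> metric_basis (ge m) (Bs m).
Proof.
move=> Hm; rewrite /metric_basis resB //=; apply/forallP => S; apply/implyP => HS.
rewrite cardB card_dec.
apply: leq_trans (leq_addr _ _).
have -> : 2 * m = \sum_(i < m) 2 by rewrite sum_nat_const card_ord mulnC.
by apply: leq_sum => i _; apply: fin1; apply: res_local.
Qed.

Lemma sum_tight m (s : 'I_m -> nat) (c : nat) : (forall i, 2 <= s i) ->
  \sum_(i < m) s i + c <= 2 * m -> c = 0 /\ forall i, s i <= 2.
Proof.
move=> Hs2 Hle.
have E : \sum_(i < m) s i = \sum_(i < m) (s i - 2) + 2 * m.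
  have Hs : forall i : 'I_m, s i = (s i - 2) + 2 by move=> i; rewrite subnK.
  by rewrite (eq_bigr _ (fun i _ => Hs i)) big_split sum_nat_const card_ord mulnC.
rewrite E in Hle.
split; first lia.
move=> i; have : s i - 2 <= \sum_(j < m) (s j - 2).
  by rewrite (bigD1 i) //= leq_addr.
lia.
Qed.

Lemma basis_eq m (R : {set 'I_(5*m).+1}) : 0 < m -> metric_basis (ge m) R -> Bs m \subset R.
Proof.
move=> Hm /andP [HR /forallP Hmin].
have := implyP (Hmin (Bs m)) (resB Hm); rewrite cardB card_dec => Hle.
have [Hz0 Hs0] := sum_tight (fun i => fin1 (res_local Hm HR (ltn_ord i))) Hle.
have Hz : zv m \notin R by apply/negP => Hz; move: Hz0; rewrite Hz.
apply/subsetP => v Hv.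
case: (vdec v) => [Ev|[i [p [Hi Hp Ev]]]].
  by move: Hv; rewrite Ev (negbTE (zv_notin_Bs m)).
have Ev' : v = inord (5*i+p) by apply/val_inj; rewrite /= inordv.
move: Hv; rewrite Ev' inBs //.
have := fin2 (res_local Hm HR Hi) (res_localz Hm HR Hz Hi) (Hs0 (Ordinal Hi) : _ <= 2).
case/and5P => _ H1 H2 _ _.
by case/orP => /eqP ->.
Qed.

Lemma forcedB m : 0 < m -> basis_forced_set (ge m) = Bs m.
Proof.
move=> Hm; apply/setP => v; rewrite inE /basis_forced.
apply/forallP/idP => [H|Hv R].
  exact: (implyP (H (Bs m)) (basisB Hm)).
by apply/implyP => HR; apply: (subsetP (basis_eq Hm HR)).
Qed.

Lemma hp_sym a b : hp a b = hp b a.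
Proof. by rewrite /hp; case: a => [|[|[|[|[|a]]]]]; case: b => [|[|[|[|[|b]]]]]. Qed.

Lemma Hn_sym m x y : Hn m x y = Hn m y x.
Proof.
rewrite /Hn hp_sym [x %/ 5 == _]eq_sym.
by case: (x < 5*m); case: (y < 5*m).
Qed.

Lemma ge_simple m : simple_graph (ge m).
Proof.
rewrite /simple_graph; apply/andP; split; first by apply/forallP => x; rewrite /ge eqxx.
apply/forallP => x; apply/forallP => y; by rewrite /ge [y == x]eq_sym [Hn m y x]Hn_sym eqxx.
Qed.

Lemma ge_conn m : connected_graph (ge m).
Proof.
move=> x y.
case: (eqVneq x (zv m)) => [->|Hx]; case: (eqVneq y (zv m)) => [->|Hy].
- exact: connect0.
- by apply: connect1; apply: ge_z1.
- by apply: connect1; apply: ge_z2.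
- apply: (connect_trans (y := zv m)); apply: connect1; [exact: ge_z2 | exact: ge_z1].
Qed.

Lemma set2_inj n (a b c d : 'I_n) : a < b -> c < d ->
  [set a; b] = [set c; d] -> (a, b) = (c, d).
Proof.
move=> ab cd E.
have : a \in [set c; d] by rewrite -E set21.
have : b \in [set c; d] by rewrite -E set22.
have : c \in [set a; b] by rewrite E set21.
rewrite !inE.
case/orP => /eqP E1; case/orP => /eqP E2; case/orP => /eqP E3; subst.
all: try by rewrite ltnn in ab.
all: try by rewrite ltnn in cd.
all: try by [].
all: lia.
Qed.



Definition f2 {n} (p : 'I_n * 'I_n) : {set 'I_n} := [set p.1; p.2].

Lemma edges_eq m : edges (ge m) =
  f2 @: [set p : 'I_(5*m).+1 * 'I_(5*m).+1 | (p.1 < p.2) && ge m p.1 p.2].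
Proof.
apply/setP => A; apply/imset2P/imsetP.
  case=> x y _; rewrite inE => /andP[_ Hxy] ->.
  case: (ltngtP x y) => H.
  - by exists (x, y); rewrite // inE /= H Hxy.
  - exists (y, x); last by rewrite /f2 /= setUC.
    by rewrite inE /= H; move: Hxy; rewrite /ge eq_sym Hn_sym.
  - by move: Hxy; rewrite /ge (val_inj H) eqxx.
case=> p; rewrite inE => /andP[_ Hp] ->.
by apply: (@Imset2spec _ _ _ _ _ _ _ p.1 p.2) => //; rewrite inE.
Qed.

Lemma f2_inj n (D : {set 'I_n * 'I_n}) : D \subset [set p : 'I_n * 'I_n | p.1 < p.2] -> {in D &, injective f2}.
Proof.
move=> /subsetP HD [a b] [c d] /HD + /HD; rewrite !inE /= => ab cd.
exact: set2_inj.
Qed.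

Lemma cardL n : #|[set p : 'I_n * 'I_n | p.1 < p.2]| = 'C(n, 2).
Proof.
rewrite -(card_in_imset (f2_inj (subxx _))) -[in RHS](card_ord n) -card_draws.
apply: eq_card => A; rewrite [in RHS]inE; apply/imsetP/idP.
  case=> p; rewrite inE => Hp ->; rewrite cards2.
  by have -> : p.1 != p.2 by apply/eqP => E; rewrite E ltnn in Hp.
case/cards2P => x [y [Hxy ->]].
case: (ltngtP x y) => H.
- by exists (x, y); rewrite // inE.
- by exists (y, x); rewrite ?inE // /f2 /= setUC.
- by move: Hxy; rewrite (val_inj H) eqxx.
Qed.

Definition ta t := nth 0 [:: 0; 0; 1; 2] t.
Definition tb t := nth 0 [:: 1; 2; 3; 4] t.

Lemma ta_lt t : ta t < 5. Proof. by case: t => [|[|[|[|t]]]] //=; case: t. Qed.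
Lemma tb_lt t : tb t < 5. Proof. by case: t => [|[|[|[|t]]]] //=; case: t. Qed.
Lemma tab t : t < 4 -> (ta t < tb t) && hp (ta t) (tb t).
Proof. by case: t => [|[|[|[|t]]]]. Qed.
Lemma tinj (t t' : 'I_4) : ta t = ta t' -> tb t = tb t' -> t = t'.
Proof.
move=> E1 E2; apply/val_inj; move: E1 E2.
by case: t => [[|[|[|[|t]]]] Ht]; case: t' => [[|[|[|[|t']]]] Ht'].
Qed.
Lemma tsurj p q : p < 5 -> q < 5 -> hp p q -> p < q ->
  has (fun t => (ta t == p) && (tb t == q)) (iota 0 4).
Proof. by case: p => [|[|[|[|[|p]]]]] //; case: q => [|[|[|[|[|q]]]]]. Qed.

Definition gq {m} (it : 'I_m * 'I_4) : 'I_(5*m).+1 * 'I_(5*m).+1 :=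
  (inord (5 * it.1 + ta it.2), inord (5 * it.1 + tb it.2)).

Lemma cardQ m : #|[set p : 'I_(5*m).+1 * 'I_(5*m).+1 | p.1 < p.2] :&:
                  [set p : 'I_(5*m).+1 * 'I_(5*m).+1 | Hn m p.1 p.2]| = 4 * m.
Proof.
have -> : [set p : 'I_(5*m).+1 * 'I_(5*m).+1 | p.1 < p.2] :&:
          [set p : 'I_(5*m).+1 * 'I_(5*m).+1 | Hn m p.1 p.2] = gq @: setT.
  apply/setP => [[x y]]; rewrite !inE /=; apply/andP/imsetP.
    case=> xy Hxy.
    case: (vdec x) => [Ex|[i [p [Hi Hp Ex]]]].
      by move: Hxy; rewrite Ex zvE Hn_z1.
    case: (vdec y) => [Ey|[i' [q [Hi' Hq Ey]]]].
      by move: Hxy; rewrite Ey zvE Hn_z2.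
    move: Hxy; rewrite Ex Ey Hn_blk //; case/andP => /eqP Ei Hpq; subst i'.
    have pq : p < q by move: xy; rewrite Ex Ey; lia.
    have /hasP [t] := tsurj Hp Hq Hpq pq.
    rewrite mem_iota => /andP [_ Ht] /andP [/eqP Ea /eqP Eb].
    exists (Ordinal Hi, Ordinal Ht); first by [].
    rewrite /gq /=; congr (_, _); apply/val_inj; rewrite /= inordv ?ta_lt ?tb_lt //.
    - by rewrite Ea.
    - by rewrite Eb.
  case=> [[i t]] _ [-> ->].
  have Hi := ltn_ord i.
  rewrite !inordv ?ta_lt ?tb_lt // Hn_blk ?ta_lt ?tb_lt // eqxx /=.
  by case/andP: (tab (ltn_ord t)) => H1 H2; split; [lia|].
rewrite card_in_imset; first by rewrite cardsT card_prod !card_ord mulnC.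
move=> [i t] [i' t'] _ _; rewrite /gq /= => -[E1 E2].
move: E1 E2 => /(congr1 val) + /(congr1 val).
rewrite /= !inordv ?ta_lt ?tb_lt // => E1 E2.
have ta1 := ta_lt t; have ta2 := ta_lt t'.
have Ei : (i : nat) = i' by lia.
have Et : ta t = ta t' by lia.
have Et' : tb t = tb t' by lia.
by rewrite (val_inj Ei) (tinj Et Et').
Qed.

Lemma edges_card m : #|edges (ge m)| + 4 * m = 'C((5*m).+1, 2).
Proof.
rewrite edges_eq card_in_imset; last first.
  by apply: f2_inj; apply/subsetP => p; rewrite !inE => /andP[-> _].
set L := [set p : 'I_(5*m).+1 * 'I_(5*m).+1 | p.1 < p.2].
set X := [set p : 'I_(5*m).+1 * 'I_(5*m).+1 | Hn m p.1 p.2].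
have -> : [set p : 'I_(5*m).+1 * 'I_(5*m).+1 | (p.1 < p.2) && ge m p.1 p.2] = L :\: X.
  apply/setP => p; rewrite !inE.
  case H: (p.1 < p.2); rewrite ?andbF //= andbT.
  by rewrite /ge; have -> : p.1 != p.2 by apply/eqP => E; rewrite E ltnn in H.
by rewrite -(cardQ m) addnC cardsID cardL.
Qed.

Theorem corollary3 (k : nat) :
  0 < k -> ~~ odd k ->
  exists (n : nat) (e : rel 'I_n),
    [/\ simple_graph e, connected_graph e,
        #|basis_forced_set e| = k &
        #|edges e| + 2 * k = (n * (n - 1)) %/ 2].
Proof.
move=> Hk Hodd.
have Ek : k = 2 * k./2 by rewrite mul2n -[LHS](odd_double_half k) (negbTE Hodd).
set m := k./2 in Ek; have Hm : 0 < m by lia.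
exists (5*m).+1, (ge m); split.
- exact: ge_simple.
- exact: ge_conn.
- by rewrite forcedB // cardB Ek.
- by rewrite divn2 subn1 -bin2 -edges_card Ek mulnA.
Qed.
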